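(* The real Lie algebra $\mathfrak g=\mathfrak{sl}(2,\mathbb R)\ltimes\mathbb R^2$ admits no inner product with an orthonormal basis consisting of geodesic elements.
   Context: $\mathfrak{sl}(2,\mathbb R)\ltimes\mathbb R^2$ is the semidirect product in which $\mathfrak{sl}(2,\mathbb R)$ acts on the abelian ideal $\mathbb R^2$ by its canonical linear action; equivalently, it is the Lie algebra of real $3\times3$ matrices of trace zero whose third row is zero, with the commutator bracket. For an inner product $\langle\cdot,\cdot\rangle$ on a real Lie algebra $\mathfrak g$, a nonzero $X\in\mathfrak g$ is a geodesic element if $\langle X,[X,Y]\rangle=0$ for all $Y\in\mathfrak g$. *)

(* Defs.v *)
From mathcomp Require Import all_boot all_order all_algebra.
From mathcomp Require Import reals.
Set Implicit Arguments. Unset Strict Implicit. Unset Printing Implicit Defensive.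
Import Order.TTheory GRing.Theory Num.Theory.
Local Open Scope ring_scope.

Section SL2R2.
Variable R : realType.

(* sl(2,R) ⋉ R^2 : real 3x3 matrices of trace zero whose third row is zero. *)
Definition in_g (A : 'M[R]_3) : Prop :=
  \tr A = 0 /\ forall j : 'I_3, A (@Ordinal 3 2 isT) j = 0.

Definition lie (A B : 'M[R]_3) : 'M[R]_3 := A *m B - B *m A.

(* An inner product on g: a symmetric, bilinear, positive definite form on g
   (the values of [ip] outside g are irrelevant). Linearity in the second
   argument follows from linearity in the first and symmetry. *)
Definition is_inner_product (ip : 'M[R]_3 -> 'M[R]_3 -> R) : Prop :=
  [/\ forall (a : R) X Y Z, in_g X -> in_g Y -> in_g Z ->
        ip (a *: X + Y) Z = a * ip X Z + ip Y Z,
      forall X Y, in_g X -> in_g Y -> ip X Y = ip Y X &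
      forall X, in_g X -> X != 0 -> 0 < ip X X].

Definition geodesic (ip : 'M[R]_3 -> 'M[R]_3 -> R) (X : 'M[R]_3) : Prop :=
  [/\ in_g X, X != 0 & forall Y, in_g Y -> ip X (lie X Y) = 0].

Definition orthonormal_basis (ip : 'M[R]_3 -> 'M[R]_3 -> R) (n : nat)
    (e : 'I_n -> 'M[R]_3) : Prop :=
  [/\ forall i, in_g (e i),
      forall i j, ip (e i) (e j) = (i == j)%:R &
      forall X, in_g X -> exists c : 'I_n -> R, X = \sum_(i < n) c i *: e i].

End SL2R2.

(* Main.v *)
Require Import Defs.
From mathcomp Require Import all_boot all_order all_algebra.
From mathcomp Require Import reals ring lra.
Set Implicit Arguments. Unset Strict Implicit. Unset Printing Implicit Defensive.
Import Order.TTheory GRing.Theory Num.Theory.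
Local Open Scope ring_scope.

Definition o0 : 'I_3 := @Ordinal 3 0 isT.
Definition o1 : 'I_3 := @Ordinal 3 1 isT.
Definition o2 : 'I_3 := @Ordinal 3 2 isT.

Lemma ord3P (P : 'I_3 -> Prop) : P o0 -> P o1 -> P o2 -> forall i, P i.
Proof.
move=> H0 H1 H2 [[|[|[|i]]] Hi] //.
- by rewrite (_ : Ordinal Hi = o0) //; apply: val_inj.
- by rewrite (_ : Ordinal Hi = o1) //; apply: val_inj.
- by rewrite (_ : Ordinal Hi = o2) //; apply: val_inj.
Qed.

Lemma sum3 (R : nmodType) (F : 'I_3 -> R) : \sum_i F i = F o0 + F o1 + F o2.
Proof.
rewrite !big_ord_recr big_ord0 /= add0r.
by congr (_ + _ + _); congr F; apply: val_inj.
Qed.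

Section Main.
Variable R : realType.

Lemma mul3 (A B : 'M[R]_3) i j :
  (A *m B) i j = A i o0 * B o0 j + A i o1 * B o1 j + A i o2 * B o2 j.
Proof. by rewrite mxE sum3. Qed.

Lemma tr3 (A : 'M[R]_3) : \tr A = A o0 o0 + A o1 o1 + A o2 o2.
Proof. by rewrite /mxtrace sum3. Qed.

Definition E1 : 'M[R]_3 := delta_mx o0 o0 - delta_mx o1 o1.
Definition E2 : 'M[R]_3 := delta_mx o0 o1.
Definition E3 : 'M[R]_3 := delta_mx o1 o0.
Definition E4 : 'M[R]_3 := delta_mx o0 o2.
Definition E5 : 'M[R]_3 := delta_mx o1 o2.

Lemma in_gP (X : 'M[R]_3) : in_g X <->
  [/\ X o1 o1 = - X o0 o0, X o2 o0 = 0, X o2 o1 = 0 & X o2 o2 = 0].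
Proof.
rewrite /in_g tr3; split.
- move=> [Ht Hr]; have h0 := Hr o0; have h1 := Hr o1; have h2 := Hr o2.
  rewrite -/o2 in h0 h1 h2.
  split => //; rewrite h2 addr0 in Ht; by apply/eqP; rewrite -addr_eq0 addrC Ht.
- move=> [h11 h0 h1 h2]; split; first by rewrite h11 h2; lra.
  by apply: ord3P.
Qed.

Lemma in_gZD a (X Y : 'M[R]_3) : in_g X -> in_g Y -> in_g (a *: X + Y).
Proof.
move=> /in_gP [a1 a2 a3 a4] /in_gP [b1 b2 b3 b4]; apply/in_gP; rewrite !mxE.
by rewrite a1 a2 a3 a4 b1 b2 b3 b4; split; ring.
Qed.

Lemma in_g0 : in_g (0 : 'M[R]_3).
Proof. by apply/in_gP; rewrite !mxE oppr0. Qed.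

Lemma in_gE1 : in_g E1. Proof. by apply/in_gP; rewrite !mxE /=; split; lra. Qed.
Lemma in_gE2 : in_g E2. Proof. by apply/in_gP; rewrite !mxE /=; split; lra. Qed.
Lemma in_gE3 : in_g E3. Proof. by apply/in_gP; rewrite !mxE /=; split; lra. Qed.
Lemma in_gE4 : in_g E4. Proof. by apply/in_gP; rewrite !mxE /=; split; lra. Qed.
Lemma in_gE5 : in_g E5. Proof. by apply/in_gP; rewrite !mxE /=; split; lra. Qed.

Lemma lieE (X Y : 'M[R]_3) i j :
  lie X Y i j = X i o0 * Y o0 j + X i o1 * Y o1 j + X i o2 * Y o2 j
              - (Y i o0 * X o0 j + Y i o1 * X o1 j + Y i o2 * X o2 j).
Proof. by rewrite /lie -!mul3 !mxE. Qed.

Lemma in_g_lie (X Y : 'M[R]_3) : in_g X -> in_g Y -> in_g (lie X Y).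
Proof.
move=> /in_gP [? ? ? ?] /in_gP [? ? ? ?]; apply/in_gP; rewrite !lieE.
split; nra.
Qed.

Lemma decomp (X : 'M[R]_3) : in_g X -> X = X o0 o0 *: E1 + (X o0 o1 *: E2 + (X o1 o0 *: E3
   + (X o0 o2 *: E4 + X o1 o2 *: E5))).
Proof.
move=> /in_gP [h11 h20 h21 h22]; apply/matrixP; apply: ord3P; apply: ord3P;
  rewrite !mxE /=; lra.
Qed.


Variable ip : 'M[R]_3 -> 'M[R]_3 -> R.
Hypothesis hip : is_inner_product ip.

Lemma ip_lin a (X Y Z : 'M[R]_3) : in_g X -> in_g Y -> in_g Z ->
  ip (a *: X + Y) Z = a * ip X Z + ip Y Z.
Proof. by case: hip => H _ _; apply: H. Qed.

Lemma ip_sym (X Y : 'M[R]_3) : in_g X -> in_g Y -> ip X Y = ip Y X.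
Proof. by case: hip => _ H _; apply: H. Qed.

Lemma ip0 (Z : 'M[R]_3) : in_g Z -> ip 0 Z = 0.
Proof.
move=> hZ; have := ip_lin 1 in_g0 in_g0 hZ.
rewrite scaler0 addr0 mul1r; lra.
Qed.

Lemma ipZ a (X Z : 'M[R]_3) : in_g X -> in_g Z -> ip (a *: X) Z = a * ip X Z.
Proof.
move=> hX hZ; have := ip_lin a hX in_g0 hZ.
by rewrite addr0 ip0 // addr0.
Qed.

Lemma ip_coord (Y Z : 'M[R]_3) : in_g Y -> in_g Z ->
  ip Y Z = Y o0 o0 * ip E1 Z + Y o0 o1 * ip E2 Z + Y o1 o0 * ip E3 Z
         + Y o0 o2 * ip E4 Z + Y o1 o2 * ip E5 Z.
Proof.
move=> hY hZ; rewrite {1}(decomp hY).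
have g5 := in_gZD (Y o1 o2) in_gE5 in_g0; rewrite addr0 in g5.
have g4 := in_gZD (Y o0 o2) in_gE4 g5.
have g3 := in_gZD (Y o1 o0) in_gE3 g4.
have g2 := in_gZD (Y o0 o1) in_gE2 g3.
rewrite (ip_lin _ in_gE1 g2 hZ) (ip_lin _ in_gE2 g3 hZ) (ip_lin _ in_gE3 g4 hZ).
rewrite (ip_lin _ in_gE4 g5 hZ) (ipZ _ in_gE5 hZ).
ring.
Qed.


Lemma geo_eqs (X : 'M[R]_3) : in_g X ->
  (forall Y, in_g Y -> ip X (lie X Y) = 0) ->
  let a := X o0 o0 in let b := X o0 o1 in let c := X o1 o0 in
  let v1 := X o0 o2 in let v2 := X o1 o2 in
  let x1 := ip E1 X in let x2 := ip E2 X in let x3 := ip E3 X in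
  let x4 := ip E4 X in let x5 := ip E5 X in
  [/\ -2 * b * x2 + 2 * c * x3 - v1 * x4 + v2 * x5 = 0,
      -c * x1 + 2 * a * x2 - v2 * x4 = 0,
      b * x1 - 2 * a * x3 - v1 * x5 = 0,
      a * x4 + c * x5 = 0 & b * x4 - a * x5 = 0].
Proof.
move=> hX H a b c v1 v2 x1 x2 x3 x4 x5.
have hE (Y : 'M[R]_3) : in_g Y -> ip (lie X Y) X = 0.
  by move=> hY; rewrite ip_sym ?H //; apply: in_g_lie.
have hC (Y : 'M[R]_3) : in_g Y -> (lie X Y) o0 o0 * x1 + (lie X Y) o0 o1 * x2
   + (lie X Y) o1 o0 * x3 + (lie X Y) o0 o2 * x4 + (lie X Y) o1 o2 * x5 = 0.
  by move=> hY; rewrite -(hE _ hY) ip_coord //; apply: in_g_lie.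
have := hC _ in_gE1; have := hC _ in_gE2; have := hC _ in_gE3;
have := hC _ in_gE4; have := hC _ in_gE5.
rewrite !lieE !mxE /=.
case/in_gP: hX => h11 h20 h21 h22; rewrite h11 h20 h21 h22.
rewrite -/a -/b -/c -/v1 -/v2 -/x1 -/x2 -/x3 -/x4 -/x5.
move=> g5 g4 g3 g2 g1; split; lra.
Qed.

Lemma alg_I0 (a b c x1 x2 x3 : R) :
  -2 * b * x2 + 2 * c * x3 = 0 -> -c * x1 + 2 * a * x2 = 0 ->
  b * x1 - 2 * a * x3 = 0 -> a * x1 + b * x2 + c * x3 = 1 ->
  [/\ 2 * a = (2 * a ^+ 2 + 2 * b * c) * x1, c = (2 * a ^+ 2 + 2 * b * c) * x2
    & b = (2 * a ^+ 2 + 2 * b * c) * x3].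
Proof.
move=> G1 G2 G3 H.
have ha : a * (a * x1 + b * x2 + c * x3) = a by rewrite H mulr1.
have hb : b * (a * x1 + b * x2 + c * x3) = b by rewrite H mulr1.
have hc : c * (a * x1 + b * x2 + c * x3) = c by rewrite H mulr1.
have k1 : a * (-2 * b * x2 + 2 * c * x3) = 0 by rewrite G1 mulr0.
have k2 : b * (-2 * b * x2 + 2 * c * x3) = 0 by rewrite G1 mulr0.
have k3 : c * (-2 * b * x2 + 2 * c * x3) = 0 by rewrite G1 mulr0.
have k4 : a * (-c * x1 + 2 * a * x2) = 0 by rewrite G2 mulr0.
have k5 : b * (-c * x1 + 2 * a * x2) = 0 by rewrite G2 mulr0.
have k6 : c * (-c * x1 + 2 * a * x2) = 0 by rewrite G2 mulr0.
have k7 : a * (b * x1 - 2 * a * x3) = 0 by rewrite G3 mulr0.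
have k8 : b * (b * x1 - 2 * a * x3) = 0 by rewrite G3 mulr0.
have k9 : c * (b * x1 - 2 * a * x3) = 0 by rewrite G3 mulr0.
split; lra.
Qed.


Lemma alg_J (a b c v1 v2 x1 x2 x3 x4 x5 : R) :
  -2 * b * x2 + 2 * c * x3 - v1 * x4 + v2 * x5 = 0 ->
  -c * x1 + 2 * a * x2 - v2 * x4 = 0 ->
  b * x1 - 2 * a * x3 - v1 * x5 = 0 ->
  a * x4 + c * x5 = 0 -> b * x4 - a * x5 = 0 ->
  (x4 != 0) || (x5 != 0) ->
  a ^+ 2 + b * c = 0 /\ 2 * (a * x1 + b * x2 + c * x3) = v1 * x4 + v2 * x5.
Proof.
move=> G1 G2 G3 G4 G5 hw.
have hpos : x4 ^+ 2 + x5 ^+ 2 != 0.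
  have sq_pos (x : R) : x != 0 -> 0 < x ^+ 2.
    by move=> h; rewrite lt_def sqrf_eq0 h sqr_ge0.
  have := sqr_ge0 x4; have := sqr_ge0 x5.
  case/orP: hw => /sq_pos h h5 h4; rewrite gt_eqF //; lra.
split.
- have h1 : a * x4 * (a * x4 + c * x5) = 0 by rewrite G4 mulr0.
  have h2 : c * x4 * (b * x4 - a * x5) = 0 by rewrite G5 mulr0.
  have h3 : a * x5 * (b * x4 - a * x5) = 0 by rewrite G5 mulr0.
  have h4 : b * x5 * (a * x4 + c * x5) = 0 by rewrite G4 mulr0.
  have : (x4 ^+ 2 + x5 ^+ 2) * (a ^+ 2 + b * c) = 0 by lra.
  by move/eqP; rewrite mulf_eq0 (negPf hpos) /= => /eqP.
- have h1 : (x4 ^+ 2 - x5 ^+ 2) * (-2 * b * x2 + 2 * c * x3 - v1 * x4 + v2 * x5) = 0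
    by rewrite G1 mulr0.
  have h2 : x4 * x5 * (-c * x1 + 2 * a * x2 - v2 * x4) = 0 by rewrite G2 mulr0.
  have h3 : x4 * x5 * (b * x1 - 2 * a * x3 - v1 * x5) = 0 by rewrite G3 mulr0.
  have h4 : x1 * x5 * (b * x4 - a * x5) = 0 by rewrite G5 mulr0.
  have h5 : x1 * x4 * (a * x4 + c * x5) = 0 by rewrite G4 mulr0.
  have h6 : x2 * x4 * (b * x4 - a * x5) = 0 by rewrite G5 mulr0.
  have h7 : x3 * x5 * (a * x4 + c * x5) = 0 by rewrite G4 mulr0.
  have : (x4 ^+ 2 + x5 ^+ 2) * (2 * (a * x1 + b * x2 + c * x3) - (v1 * x4 + v2 * x5)) = 0
    by lra.
  move/eqP; rewrite mulf_eq0 (negPf hpos) /= subr_eq0 => /eqP //.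
Qed.

Lemma alg_final (a b c p1 q1 r1 p2 q2 r2 : R) :
  2 * a * p1 + c * q1 + b * r1 = 0 -> 2 * a * p2 + c * q2 + b * r2 = 0 ->
  2 * p1 * p2 + q1 * r2 + r1 * q2 = 0 -> a ^+ 2 + b * c = 0 ->
  2 * p1 ^+ 2 + 2 * q1 * r1 != 0 -> 2 * p2 ^+ 2 + 2 * q2 * r2 != 0 ->
  [/\ a = 0, b = 0 & c = 0].
Proof.
move=> L1 L2 K12 Nn K11 K22.
have hb : b = 0.
  have e1 : b ^+ 2 * (2 * p1 ^+ 2 + 2 * q1 * r1) = 2 * (b * p1 - a * q1) ^+ 2.
    have t1 : b * q1 * (2 * a * p1 + c * q1 + b * r1) = 0 by rewrite L1 mulr0.
    have t2 : q1 ^+ 2 * (a ^+ 2 + b * c) = 0 by rewrite Nn mulr0.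
    lra.
  have e2 : b ^+ 2 * (2 * p2 ^+ 2 + 2 * q2 * r2) = 2 * (b * p2 - a * q2) ^+ 2.
    have t1 : b * q2 * (2 * a * p2 + c * q2 + b * r2) = 0 by rewrite L2 mulr0.
    have t2 : q2 ^+ 2 * (a ^+ 2 + b * c) = 0 by rewrite Nn mulr0.
    lra.
  have e3 : (b * p1 - a * q1) * (b * p2 - a * q2) = 0.
    have t1 : b * q1 * (2 * a * p2 + c * q2 + b * r2) = 0 by rewrite L2 mulr0.
    have t2 : b * q2 * (2 * a * p1 + c * q1 + b * r1) = 0 by rewrite L1 mulr0.
    have t3 : q1 * q2 * (a ^+ 2 + b * c) = 0 by rewrite Nn mulr0.
    have t4 : b ^+ 2 * (2 * p1 * p2 + q1 * r2 + r1 * q2) = 0 by rewrite K12 mulr0.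
    lra.
  move/eqP: e3; rewrite mulf_eq0 => /orP [] /eqP h.
  - move: e1; rewrite h expr0n /= mulr0 => /eqP; rewrite mulf_eq0 (negPf K11) orbF.
    by rewrite sqrf_eq0 => /eqP.
  - move: e2; rewrite h expr0n /= mulr0 => /eqP; rewrite mulf_eq0 (negPf K22) orbF.
    by rewrite sqrf_eq0 => /eqP.
have hc : c = 0.
  have e1 : c ^+ 2 * (2 * p1 ^+ 2 + 2 * q1 * r1) = 2 * (c * p1 - a * r1) ^+ 2.
    have t1 : c * r1 * (2 * a * p1 + c * q1 + b * r1) = 0 by rewrite L1 mulr0.
    have t2 : r1 ^+ 2 * (a ^+ 2 + b * c) = 0 by rewrite Nn mulr0.
    lra.
  have e2 : c ^+ 2 * (2 * p2 ^+ 2 + 2 * q2 * r2) = 2 * (c * p2 - a * r2) ^+ 2.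
    have t1 : c * r2 * (2 * a * p2 + c * q2 + b * r2) = 0 by rewrite L2 mulr0.
    have t2 : r2 ^+ 2 * (a ^+ 2 + b * c) = 0 by rewrite Nn mulr0.
    lra.
  have e3 : (c * p1 - a * r1) * (c * p2 - a * r2) = 0.
    have t1 : c * r1 * (2 * a * p2 + c * q2 + b * r2) = 0 by rewrite L2 mulr0.
    have t2 : c * r2 * (2 * a * p1 + c * q1 + b * r1) = 0 by rewrite L1 mulr0.
    have t3 : r1 * r2 * (a ^+ 2 + b * c) = 0 by rewrite Nn mulr0.
    have t4 : c ^+ 2 * (2 * p1 * p2 + q1 * r2 + r1 * q2) = 0 by rewrite K12 mulr0.
    lra.
  move/eqP: e3; rewrite mulf_eq0 => /orP [] /eqP h.
  - move: e1; rewrite h expr0n /= mulr0 => /eqP; rewrite mulf_eq0 (negPf K11) orbF.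
    by rewrite sqrf_eq0 => /eqP.
  - move: e2; rewrite h expr0n /= mulr0 => /eqP; rewrite mulf_eq0 (negPf K22) orbF.
    by rewrite sqrf_eq0 => /eqP.
split => //.
by move: Nn; rewrite hb mul0r addr0 => /eqP; rewrite sqrf_eq0 => /eqP.
Qed.



Variable n : nat.
Variable e : 'I_n -> 'M[R]_3.
Hypothesis he : forall i, in_g (e i).
Hypothesis hon : forall i j, ip (e i) (e j) = (i == j)%:R.
Hypothesis hspan : forall X, in_g X -> exists c : 'I_n -> R, X = \sum_(i < n) c i *: e i.
Hypothesis hgeo : forall i, geodesic ip (e i).

Lemma ip_sum (c : 'I_n -> R) (Z : 'M[R]_3) : in_g Z ->
  ip (\sum_(i < n) c i *: e i) Z = \sum_(i < n) c i * ip (e i) Z.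
Proof.
move=> hZ.
pose P (S : 'M[R]_3) (s : R) := in_g S /\ ip S Z = s.
suff [] : P (\sum_(i < n) c i *: e i) (\sum_(i < n) c i * ip (e i) Z) by [].
apply: (big_rec2 P).
  by split; [exact: in_g0 | exact: ip0].
move=> i S s _ [hS <-]; split; first exact: in_gZD.
by rewrite ip_lin.
Qed.

Lemma complete (Y : 'M[R]_3) : in_g Y -> Y = \sum_(i < n) ip Y (e i) *: e i.
Proof.
move=> hY; have [c hc] := hspan hY.
suff hc' : forall j, ip Y (e j) = c j by rewrite {1}hc; apply: eq_bigr => j _; rewrite hc'.
move=> j; rewrite hc ip_sum //.
rewrite (bigD1 j) //= hon eqxx mulr1 big1 ?addr0 // => i /negPf hij.
by rewrite hon hij mulr0.
Qed.

Lemma diag_sum (Y : 'M[R]_3) k l : in_g Y ->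
  Y k l = \sum_(i < n) ip Y (e i) * e i k l.
Proof.
move=> hY; rewrite {1}(complete hY) summxE; apply: eq_bigr => i _; by rewrite mxE.
Qed.


Local Notation A i := (e i o0 o0).
Local Notation B i := (e i o0 o1).
Local Notation C i := (e i o1 o0).
Local Notation V1 i := (e i o0 o2).
Local Notation V2 i := (e i o1 o2).
Local Notation X1 i := (ip E1 (e i)).
Local Notation X2 i := (ip E2 (e i)).
Local Notation X3 i := (ip E3 (e i)).
Local Notation X4 i := (ip E4 (e i)).
Local Notation X5 i := (ip E5 (e i)).

Lemma Fij i j : ip (e j) (e i) =
  A j * X1 i + B j * X2 i + C j * X3 i + V1 j * X4 i + V2 j * X5 i.
Proof. by rewrite ip_coord. Qed.

Lemma Gi i :
  [/\ -2 * B i * X2 i + 2 * C i * X3 i - V1 i * X4 i + V2 i * X5 i = 0,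
      - C i * X1 i + 2 * A i * X2 i - V2 i * X4 i = 0,
      B i * X1 i - 2 * A i * X3 i - V1 i * X5 i = 0,
      A i * X4 i + C i * X5 i = 0 & B i * X4 i - A i * X5 i = 0].
Proof. by case: (hgeo i) => _ _ H; apply: geo_eqs. Qed.

Definition Pb i := (X4 i != 0) || (X5 i != 0).

Lemma wJ i : Pb i ->
  A i ^+ 2 + B i * C i = 0 /\ V1 i * X4 i + V2 i * X5 i = 2 / 3 /\
  (A i, B i, C i) != (0, 0, 0).
Proof.
move=> hP; case: (Gi i) => g1 g2 g3 g4 g5.
have [hN hw] := alg_J g1 g2 g3 g4 g5 hP.
have hF := Fij i i; rewrite hon eqxx /= mulr1n in hF.
split => //; split; first lra.
apply/negP => /eqP [ha hb hc]; move: hw hF; rewrite ha hb hc; lra.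
Qed.

Lemma wI i : ~~ Pb i -> X4 i = 0 /\ X5 i = 0.
Proof. by rewrite /Pb negb_or !negbK => /andP [/eqP -> /eqP ->]. Qed.

Lemma KI i k : ~~ Pb i ->
  2 * A i * A k + C i * B k + B i * C k
    = (2 * A i ^+ 2 + 2 * B i * C i) * ip (e k) (e i) /\
  2 * A i ^+ 2 + 2 * B i * C i != 0.
Proof.
move=> /wI [h4 h5]; case: (Gi i); rewrite h4 h5 !mulr0 !subr0 !addr0 => g1 g2 g3 _ _.
have hF := Fij i i; rewrite hon eqxx /= mulr1n h4 h5 !mulr0 !addr0 in hF.
have [k1 k2 k3] := alg_I0 g1 g2 g3 (esym hF).
split.
  rewrite Fij h4 h5 !mulr0 !addr0.
  move: k1 k2 k3; set K := (2 * A i ^+ 2 + 2 * B i * C i) => k1 k2 k3.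
  rewrite k1 k2 k3; ring.
apply/negP => /eqP hk; move: k1 k2 k3 hF; rewrite hk !mul0r.
move=> ha hc hb; have ha' : A i = 0 by lra.
rewrite ha' hb hc !mul0r !addr0 => /eqP; by rewrite oner_eq0.
Qed.


Lemma no_basis : False.
Proof.
have d (Y : 'M[R]_3) k l : in_g Y -> Y k l = 1 -> \sum_(i < n) ip Y (e i) * e i k l = 1.
  by move=> hY h; rewrite -diag_sum.
have d1 := d E1 o0 o0 in_gE1 ltac:(by rewrite !mxE /=; lra).
have d2 := d E2 o0 o1 in_gE2 ltac:(by rewrite !mxE).
have d3 := d E3 o1 o0 in_gE3 ltac:(by rewrite !mxE).
have d4 := d E4 o0 o2 in_gE4 ltac:(by rewrite !mxE).
have d5 := d E5 o1 o2 in_gE5 ltac:(by rewrite !mxE).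
have hn : (n%:R : R) = 5.
  have -> : (n%:R : R) = \sum_(i < n) 1 by rewrite sumr_const card_ord.
  rewrite (eq_bigr (fun i => X1 i * A i + X2 i * B i + X3 i * C i
                             + X4 i * V1 i + X5 i * V2 i)); last first.
    by move=> i _; have := Fij i i; rewrite hon eqxx /= mulr1n => ->; ring.
  rewrite !big_split /= d1 d2 d3 d4 d5; lra.
have hn5 : n = 5%N by apply/eqP; rewrite -(eqr_nat R) hn.
have hw : \sum_(i < n) (V1 i * X4 i + V2 i * X5 i) = 2.
  rewrite big_split /=.
  have e4 : \sum_(i < n) V1 i * X4 i = 1.
    by rewrite -d4; apply: eq_bigr => i _; rewrite mulrC.
  have e5 : \sum_(i < n) V2 i * X5 i = 1.
    by rewrite -d5; apply: eq_bigr => i _; rewrite mulrC.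
  rewrite e4 e5; lra.
have hw2 : \sum_(i < n) (V1 i * X4 i + V2 i * X5 i) = \sum_(i in Pb) (2 / 3 : R).
  rewrite [RHS]big_mkcond /=; apply: eq_bigr => i _.
  case: ifP => h.
  - by case: (wJ h) => _ [].
  - by have [-> ->] := wI (negbT h); rewrite !mulr0 addr0.
rewrite sumr_const hw in hw2.
have hJ : #|Pb| = 3%N.
  apply/eqP; rewrite -(eqr_nat R); apply/eqP.
  move: hw2; rewrite -mulr_natr; lra.
have hI : #|[predC Pb]| = 2%N.
  by have := cardC Pb; rewrite card_ord hJ => h; apply/eqP; rewrite -(eqn_add2l 3) h hn5.
have [i1 [i2 [hi1 hi2 hneq]]] : exists x y, [/\ x \in [predC Pb], y \in [predC Pb] & x != y].
  by apply/card_gt1P; rewrite hI.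
have [j hj] : exists j, j \in Pb by apply/card_gt0P; rewrite hJ.
rewrite !inE in hi1 hi2 hj.
have [hN [hwj hnz]] := wJ hj.
have [K1j K1] := KI j hi1.
have [K2j K2] := KI j hi2.
have [K12 _] := KI i2 hi1.
have Hij (x y : 'I_n) : x != y -> ip (e y) (e x) = 0.
  by move=> /negPf h; rewrite hon eq_sym h.
have hji1 : j != i1 by apply: contraNneq hi1 => <-.
have hji2 : j != i2 by apply: contraNneq hi2 => <-.
rewrite Hij ?mulr0 in K1j; last by rewrite eq_sym.
rewrite Hij ?mulr0 in K2j; last by rewrite eq_sym.
rewrite Hij ?mulr0 in K12; last by [].
have L1 : 2 * A j * A i1 + C j * B i1 + B j * C i1 = 0 by lra.
have L2 : 2 * A j * A i2 + C j * B i2 + B j * C i2 = 0 by lra.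
have L12 : 2 * A i1 * A i2 + B i1 * C i2 + C i1 * B i2 = 0 by lra.
have [ha hb hc] := alg_final L1 L2 L12 hN K1 K2.
move: hnz; by rewrite ha hb hc eqxx.
Qed.

End Main.

Theorem proposition8p2 (R : realType) (ip : 'M[R]_3 -> 'M[R]_3 -> R) :
  is_inner_product ip ->
  ~ (exists (n : nat) (e : 'I_n -> 'M[R]_3),
       orthonormal_basis ip e /\ forall i, geodesic ip (e i)).
Proof.
move=> hip [n [e [[he hon hspan] hgeo]]].
exact: (no_basis hip he hon hspan hgeo).
Qed.
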